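(* Let $b\ge3$, $1\le j\le b-1$, $0<\epsilon\le\frac1{j+1}$. Let $p,q$ be probability vectors in $\mathbb R^b$ with $p_1\ge1-\epsilon$ and $q_1\le q_2\le\dots\le q_b$. Then $$\Psi_j(p_1,\dots,p_b;\,q_1,q_2,\dots,q_b)\le\Psi_j(p_1,\dots,p_b;\,0,q_1+q_2,q_3,\dots,q_b).$$
   Context: For an integer $1\le j\le b-1$ and vectors $p,q\in\mathbb R^b$, $$\Psi_j(p;q)=\frac{1}{(b-j-1)!}\sum_{\sigma\in S_b}\Big(p_{\sigma(1)}\cdots p_{\sigma(j)}\,q_{\sigma(j+1)}+q_{\sigma(1)}\cdots q_{\sigma(j)}\,p_{\sigma(j+1)}\Big),$$ where $S_b$ is the set of permutations of $\{1,\dots,b\}$; the first $b$ arguments form $p$ and the last $b$ form $q$. *)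

(* Defs.v *)
From mathcomp Require Import all_boot all_order all_algebra all_fingroup.
Set Implicit Arguments. Unset Strict Implicit. Unset Printing Implicit Defensive.
Import Order.TTheory GRing.Theory Num.Theory.
Local Open Scope ring_scope.

(* Indices are 0-based: coordinate k (1-based) of the paper is ordinal k-1.
   sigma(1..j) becomes s 0..s (j-1) and sigma(j+1) becomes s j; the factor
   "\sum_(i | val i == j) x (s i)" is exactly x (s j) when j < b. *)
Definition Psi (R : realFieldType) (b j : nat) (p q : 'I_b -> R) : R :=
  ((b - j - 1)`!%:R)^-1 *
  \sum_(s : 'S_b)
     ((\prod_(i < b | (val i < j)%N) p (s i)) * (\sum_(i < b | val i == j) q (s i))
    + (\prod_(i < b | (val i < j)%N) q (s i)) * (\sum_(i < b | val i == j) p (s i))).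

Definition prob_vec (R : realFieldType) (b : nat) (p : 'I_b -> R) : Prop :=
  (forall i, 0 <= p i) /\ \sum_(i < b) p i = 1.

Definition merge12 (R : realFieldType) (n : nat) (q : 'I_n.+2 -> R) : 'I_n.+2 -> R :=
  fun i => if val i == 0%N then 0
           else if val i == 1%N then q ord0 + q (inord 1) else q i.

(* Main.v *)
Require Import Defs.
From mathcomp Require Import all_boot all_order all_algebra all_fingroup.
From mathcomp Require Import ring lra.
Set Implicit Arguments. Unset Strict Implicit. Unset Printing Implicit Defensive.
Import Order.TTheory GRing.Theory Num.Theory.
Local Open Scope ring_scope.

Definition BB (R : realFieldType) n j (x : 'I_n.+3 -> R) (s : 'S_n.+3) : R :=
  \prod_(i < n.+3 | (val i < j)%N) x (s i).

Definition x1 n : 'I_n.+3 := inord 1.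

Lemma x1E n : val (x1 n) = 1%N.
Proof. by rewrite /x1 /= inordK. Qed.

Lemma x01 n : (ord0 : 'I_n.+3) != x1 n.
Proof. by apply/eqP => /(congr1 val); rewrite x1E. Qed.

Lemma merge0 (R : realFieldType) n (q : 'I_n.+3 -> R) : merge12 q ord0 = 0.
Proof. by rewrite /merge12. Qed.

Lemma merge1 (R : realFieldType) n (q : 'I_n.+3 -> R) :
  merge12 q (x1 n) = q ord0 + q (x1 n).
Proof. by rewrite /merge12 x1E. Qed.

Lemma mergeD (R : realFieldType) n (q : 'I_n.+3 -> R) x :
  x != ord0 -> x != x1 n -> merge12 q x = q x.
Proof.
move=> h0 h1; rewrite /merge12.
have -> : (val x == 0%N) = false by apply/negbTE; apply: contra h0 => /eqP h; apply/eqP/val_inj.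
have -> : (val x == 1%N) = false.
  by apply/negbTE; apply: contra h1 => /eqP h; apply/eqP/val_inj; rewrite /= x1E.
done.
Qed.

Lemma term1 (R : realFieldType) n j (jj : 'I_n.+3) (hjj : val jj = j)
  (p q : 'I_n.+3 -> R) :
  (forall x, 0 <= p x) -> (forall x, 0 <= q x) -> p (x1 n) <= p ord0 ->
  \sum_(s : 'S_n.+3) BB j p s * q (s jj) <= \sum_(s : 'S_n.+3) BB j p s * merge12 q (s jj).
Proof.
move=> p0 q0 p10.
set t := tperm (ord0 : 'I_n.+3) (x1 n).
have tx0 : t ord0 = x1 n by rewrite /t tpermL.
have tx1 : t (x1 n) = ord0 by rewrite /t tpermR.
have txD : forall x, x != ord0 -> x != x1 n -> t x = x.
  by move=> x a b; rewrite /t tpermD // eq_sym.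
set f := fun s : 'S_n.+3 => BB j p s * (merge12 q (s jj) - q (s jj)).
suff : 0 <= \sum_s f s.
  rewrite /f; under eq_bigr do rewrite mulrBr.
  by rewrite sumrB subr_ge0.
have E : \sum_s f s = \sum_s f (s * t)%g := reindex_inj (mulIg t).
have : 0 <= \sum_s (f s + f (s * t)%g).
  apply: sumr_ge0 => s _.
  have sne : forall i : 'I_n.+3, (val i < j)%N -> s i != s jj.
    move=> i hi; apply: contraTneq hi => /perm_inj ->; by rewrite hjj ltnn.
  rewrite /f /BB (permM s t jj).
  have Bge : forall u : 'S_n.+3, 0 <= BB j p u.
    by move=> u; apply: prodr_ge0 => i _.
  have BT : forall i : 'I_n.+3, (val i < j)%N -> (s * t)%g i = t (s i) by move=> i _; rewrite permM.
  have -> : \prod_(i < n.+3 | (val i < j)%N) p ((s * t)%g i) = \prod_(i < n.+3 | (val i < j)%N) p (t (s i)).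
    by apply: eq_bigr => i _; rewrite permM.
  case: (eqVneq (s jj) ord0) => [h0|h0].
    rewrite h0 tx0 merge0 merge1.
    have : BB j p s <= \prod_(i < n.+3 | (val i < j)%N) p (t (s i)).
      apply: ler_prod => i hi; rewrite p0 /=.
      have hs := sne i hi; rewrite h0 in hs.
      case: (eqVneq (s i) (x1 n)) => [->|h1]; first by rewrite tx1.
      by rewrite txD.
    have := q0 ord0; rewrite /BB; nra.
  case: (eqVneq (s jj) (x1 n)) => [h1|h1].
    rewrite h1 tx1 merge0 merge1.
    have : \prod_(i < n.+3 | (val i < j)%N) p (t (s i)) <= BB j p s.
      apply: ler_prod => i hi; rewrite p0 /=.
      have hs := sne i hi; rewrite h1 in hs.
      case: (eqVneq (s i) ord0) => [->|h2]; first by rewrite tx0.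
      by rewrite txD.
    have := q0 ord0; rewrite /BB; nra.
  rewrite txD // mergeD //; have := Bge s; rewrite /BB; nra.
rewrite big_split /= -E; lra.
Qed.

Lemma sum_sub (R : numDomainType) (I : finType) (P Q : pred I) (F : I -> R) :
  (forall i, 0 <= F i) -> (forall i, P i -> Q i) ->
  \sum_(i | P i) F i <= \sum_(i | Q i) F i.
Proof.
move=> F0 PQ; rewrite [X in X <= _]big_mkcond [X in _ <= X]big_mkcond.
apply: ler_sum => i _; case: (boolP (P i)) => Pi; first by rewrite (PQ i Pi).
by case: (Q i).
Qed.

Lemma perm_neq n j (s : 'S_n.+3) i v :
  (val i < j)%N -> ~~ (val ((s^-1)%g v) < j)%N -> s i != v.
Proof. by move=> hi hv; apply/eqP => e; move: hv; rewrite -e permK hi. Qed.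

Lemma perm_neq2 n (s : 'S_n.+3) i v : i != (s^-1)%g v -> s i != v.
Proof. by move=> hi; apply/eqP => e; move: hi; rewrite -e permK eqxx. Qed.

Lemma BB_D1 (R : realFieldType) n j (x : 'I_n.+3 -> R) (s : 'S_n.+3) c :
  (val c < j)%N -> BB j x s = x (s c) * \prod_(i < n.+3 | (val i < j)%N && (i != c)) x (s i).
Proof. by move=> hc; rewrite /BB (bigD1 c). Qed.

Lemma invMt n (s u : 'S_n.+3) x : ((s * u)^-1)%g x = (s^-1)%g ((u^-1)%g x).
Proof. by rewrite invgM permM. Qed.

Lemma prod_mem0 (R : realFieldType) n j (q : 'I_n.+3 -> R) (s : 'S_n.+3) :
  (val ((s^-1)%g ord0) < j)%N -> BB j (merge12 q) s = 0.
Proof. by move=> h; rewrite (BB_D1 _ _ h) permKV merge0 mul0r. Qed.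

Lemma prod_none (R : realFieldType) n j (q : 'I_n.+3 -> R) (s : 'S_n.+3) :
  ~~ (val ((s^-1)%g ord0) < j)%N -> ~~ (val ((s^-1)%g (x1 n)) < j)%N ->
  BB j (merge12 q) s = BB j q s.
Proof.
move=> h0 h1; apply: eq_bigr => i hi.
by rewrite mergeD //; [exact: perm_neq hi h0 | exact: perm_neq hi h1].
Qed.

Lemma prod_case3 (R : realFieldType) n j (q : 'I_n.+3 -> R) (s : 'S_n.+3) :
  (val ((s^-1)%g (x1 n)) < j)%N -> ~~ (val ((s^-1)%g ord0) < j)%N ->
  BB j (merge12 q) s - BB j q s = BB j q (s * tperm ord0 (x1 n))%g.
Proof.
move=> h1 h0; set c := (s^-1)%g (x1 n).
rewrite !(BB_D1 _ _ h1) permM permKV merge1 tpermR.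
have E1 : \prod_(i < n.+3 | (val i < j)%N && (i != c)) merge12 q (s i) =
          \prod_(i < n.+3 | (val i < j)%N && (i != c)) q (s i).
  apply: eq_bigr => i /andP[hi hc]; rewrite mergeD //; first exact: perm_neq hi h0.
  exact: perm_neq2.
have E2 : \prod_(i < n.+3 | (val i < j)%N && (i != c)) q ((s * tperm ord0 (x1 n))%g i) =
          \prod_(i < n.+3 | (val i < j)%N && (i != c)) q (s i).
  apply: eq_bigr => i /andP[hi hc]; rewrite permM tpermD // eq_sym.
    exact: perm_neq hi h0.
  exact: perm_neq2.
rewrite E1 E2; ring.
Qed.

Lemma Bswap (R : realFieldType) n j (jj : 'I_n.+3) (hjj : val jj = j)
  (q : 'I_n.+3 -> R) (s : 'S_n.+3) i :
  (forall x, 0 <= q x) -> (forall x, x != ord0 -> q (x1 n) <= q x) ->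
  s jj = ord0 -> (val ((s^-1)%g (x1 n)) < j)%N -> (val i < j)%N -> i != (s^-1)%g (x1 n) ->
  BB j q (tperm i jj * s)%g <= BB j q (s * tperm ord0 (x1 n))%g.
Proof.
move=> q0 qm hs hc hi hic; set c := (s^-1)%g (x1 n).
have ha : (s^-1)%g ord0 = jj by rewrite -hs permK.
have ijj : i != jj by apply/eqP => e; move: hi; rewrite e hjj ltnn.
have cjj : c != jj by apply/eqP => e; move: hc; rewrite -/c e hjj ltnn.
rewrite {2}/BB (reindex_inj (@perm_inj _ (tperm i c))) /=.
rewrite (eq_bigl (fun k : 'I_n.+3 => (val k < j)%N)); last first.
  move=> k /=; case: (tpermP i c k) => [->|->|_ _] //.
    by rewrite hi hc.
  by rewrite hi hc.
apply: ler_prod => k hk; rewrite !permM q0 /=.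
case: (eqVneq k i) => [->|hki].
  by rewrite tpermL tpermL hs permKV tpermR.
case: (eqVneq k c) => [->|hkc].
  rewrite tpermR tpermD ?(eq_sym jj) // 1?eq_sym // permKV.
  have si0 : s i != ord0 by apply: perm_neq2; rewrite ha.
  have si1 : s i != x1 n by apply: perm_neq2.
  by rewrite tpermD ?(eq_sym (s i)) 1?eq_sym // qm.
have kjj : k != jj by apply/eqP => e; move: hk; rewrite e hjj ltnn.
rewrite tpermD 1?eq_sym // tpermD 1?eq_sym //.
have sk0 : s k != ord0 by apply: perm_neq2; rewrite ha.
have sk1 : s k != x1 n by apply: perm_neq2.
by rewrite tpermD 1?eq_sym.
Qed.

Lemma psum_bound (R : realFieldType) n j (jj : 'I_n.+3) (hjj : val jj = j)
  (p : 'I_n.+3 -> R) (s : 'S_n.+3) c :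
  (forall x, 0 <= p x) -> \sum_x p x = 1 ->
  s jj = ord0 -> s c = x1 n -> c != jj ->
  \sum_(i | (val i < j)%N && (i != c)) p (s i) <= 1 - p ord0 - p (x1 n).
Proof.
move=> p0 hsum hs hc cjj.
have E : \sum_i p (s i) = 1.
  by rewrite -hsum [RHS](reindex_inj (@perm_inj _ s)).
rewrite (bigD1 jj) //= (bigD1 c) //= hs hc in E.
have : \sum_(i | (val i < j)%N && (i != c)) p (s i) <=
       \sum_(i | (true && (i != jj)) && (i != c)) p (s i).
  apply: sum_sub => // i /andP[hi ->]; rewrite andbT /=.
  by apply/eqP => e; move: hi; rewrite e hjj ltnn.
lra.
Qed.

Lemma term2 (R : realFieldType) n j (jj : 'I_n.+3) (hjj : val jj = j)
  (p q : 'I_n.+3 -> R) :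
  (forall x, 0 <= p x) -> \sum_x p x = 1 ->
  p (x1 n) <= p ord0 -> 1 - p ord0 - p (x1 n) <= p ord0 - p (x1 n) ->
  (forall x, 0 <= q x) -> (forall x, x != ord0 -> q (x1 n) <= q x) ->
  \sum_(s : 'S_n.+3) BB j q s * p (s jj) <= \sum_(s : 'S_n.+3) BB j (merge12 q) s * p (s jj).
Proof.
move=> p0 hsum p10 p2 q0 qm.
set t := tperm (ord0 : 'I_n.+3) (x1 n).
set m0 := fun s : 'S_n.+3 => (val ((s^-1)%g ord0) < j)%N.
set m1 := fun s : 'S_n.+3 => (val ((s^-1)%g (x1 n)) < j)%N.
set W := fun s : 'S_n.+3 => (BB j (merge12 q) s - BB j q s) * p (s jj).
suff : 0 <= \sum_s W s.
  by rewrite /W; under eq_bigr do rewrite mulrBl; rewrite sumrB subr_ge0.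
have m0t : forall s, m0 (s * t)%g = m1 s by move=> s; rewrite /m0 /m1 invMt tpermV tpermL.
have m1t : forall s, m1 (s * t)%g = m0 s by move=> s; rewrite /m0 /m1 invMt tpermV tpermR.
have Bge : forall u, 0 <= BB j q u by move=> u; apply: prodr_ge0 => i _.
have jjn : forall i : 'I_n.+3, (val i < j)%N -> i != jj.
  by move=> i hi; apply/eqP => e; move: hi; rewrite e hjj ltnn.
set Y := fun s : 'S_n.+3 => (if m0 s && ~~ m1 s then 0 else W s) +
                  (if m1 s && ~~ m0 s then W (s * t)%g else 0).
have EY : \sum_s W s = \sum_s Y s.
  rewrite /Y big_split /=.
  have -> : \sum_s (if m1 s && ~~ m0 s then W (s * t)%g else 0) =
            \sum_s (if m0 s && ~~ m1 s then W s else 0).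
    rewrite [RHS](reindex_inj (mulIg t)) /=.
    by apply: eq_bigr => s _; rewrite m0t m1t.
  rewrite -big_split; apply: eq_bigr => s _ /=; by case: ifP; rewrite ?add0r ?addr0.
set G := fun s : 'S_n.+3 => if (s jj == ord0) && m1 s
           then BB j q (s * t)%g * (p ord0 - p (x1 n)) else 0.
set L := fun s : 'S_n.+3 => if m0 s && m1 s then BB j q s * p (s jj) else 0.
have YGL : forall s : 'S_n.+3, G s - L s <= Y s.
  move=> s; rewrite /G /L /Y.
  have H0 : (val ((s^-1)%g ord0) < j)%N = m0 s by [].
  have H1 : (val ((s^-1)%g (x1 n)) < j)%N = m1 s by [].
  case h0: (m0 s); case h1: (m1 s); rewrite h0 in H0; rewrite h1 in H1;
    rewrite ?andbT ?andbF /=.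
  - have hs : s jj != ord0.
      by apply: perm_neq2; apply/eqP => e; move: h0; rewrite /m0 -e hjj ltnn.
    rewrite (negbTE hs) /W prod_mem0; last by move: h0.
    by rewrite sub0r add0r addr0 mulNr.
  - by rewrite subrr addr0.
  - rewrite /W prod_case3 ?H0 ?H1 //.
    rewrite prod_mem0; last by have := m0t s; rewrite h1.
    rewrite (permM s t jj).
    case: (eqVneq (s jj) ord0) => hs.
      rewrite hs /t tpermL; lra.
    have hs1 : s jj != x1 n.
      by apply: perm_neq2; apply/eqP => e; move: h1; rewrite /m1 -e hjj ltnn.
    rewrite /t tpermD 1?eq_sym //; lra.
  - rewrite subrr addr0 /W prod_none ?subrr ?mul0r //.
    + by rewrite H0.
    + by rewrite H1.
have EL : \sum_s L s = \sum_(s : 'S_n.+3) \sum_(i | (val i < j)%N)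
            (if s jj == ord0 then L (tperm i jj * s)%g else 0).
  transitivity (\sum_(s : 'S_n.+3) \sum_(i | (val i < j)%N) (if s i == ord0 then L s else 0)).
    apply: eq_bigr => s _.
    case h0 : (m0 s).
    - rewrite (bigD1 ((s^-1)%g ord0)) /=; last exact: h0.
      rewrite permKV eqxx big1 ?addr0 // => i /andP[_ hi].
      by rewrite (negbTE (perm_neq2 hi)).
    - have -> : L s = 0 by rewrite /L h0.
      by rewrite big1 // => i _; case: ifP.
  rewrite exchange_big [RHS]exchange_big /=; apply: eq_bigr => i hi.
  rewrite (reindex_inj (mulgI (tperm i jj))) /=; apply: eq_bigr => s _.
  by rewrite permM tpermL.
have HG : forall s : 'S_n.+3, \sum_(i | (val i < j)%N)
            (if s jj == ord0 then L (tperm i jj * s)%g else 0) <= G s.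
  move=> s.
  have Gge : 0 <= G s.
    by rewrite /G; case: ifP => _ //; apply: mulr_ge0 => //; rewrite subr_ge0.
  case: (eqVneq (s jj) ord0) => hs; last by rewrite big1 // => i _; rewrite (negbTE hs).
  rewrite (eq_bigr (fun i => L (tperm i jj * s)%g)); last by move=> i _.
  have ha : (s^-1)%g ord0 = jj by rewrite -hs permK.
  set c := (s^-1)%g (x1 n).
  have hsc : s c = x1 n by rewrite permKV.
  have cjj : c != jj.
    apply/eqP => e; move: hsc; rewrite e hs => h.
    by move: (x01 n); rewrite h eqxx.
  have mt : forall i : 'I_n.+3, m1 (tperm i jj * s)%g = (val (tperm i jj c) < j)%N.
    by move=> i; rewrite /m1 invMt tpermV.
  case h1 : (m1 s).
  - rewrite /G /= hs eqxx h1 /=.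
    have hc : (val c < j)%N by exact: h1.
    apply: (@le_trans _ _ (\sum_(i | (val i < j)%N)
              (if i != c then BB j q (s * t)%g * p (s i) else 0))).
      apply: ler_sum => i hi.
      case: (eqVneq i c) => [->|hic] /=.
        by rewrite /L mt tpermL hjj ltnn andbF.
      rewrite /L; case: ifP => _; last by apply: mulr_ge0.
      rewrite permM tpermR; apply: ler_pM; [exact: Bge | exact: p0 | exact: Bswap | exact: lexx].
    rewrite -big_mkcondr -big_distrr /=.
    have := psum_bound hjj p0 hsum hs hsc cjj.
    have := Bge (s * t)%g; nra.
  - have hc : (val c < j)%N = false by exact: h1.
    rewrite big1 // => i hi; rewrite /L mt tpermD ?hc ?andbF //.
      by apply/eqP => e; move: hc; rewrite -e hi.
    by rewrite eq_sym.
have h1 : \sum_s (G s - L s) <= \sum_s Y s by apply: ler_sum => s _; exact: YGL.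
have h2 : 0 <= \sum_(s : 'S_n.+3) (G s - \sum_(i | (val i < j)%N)
            (if s jj == ord0 then L (tperm i jj * s)%g else 0)).
  by apply: sumr_ge0 => s _; rewrite subr_ge0.
rewrite sumrB in h1; rewrite sumrB -EL in h2; rewrite EY; exact: le_trans h2 h1.
Qed.

Theorem mainTheorem9 (R : realFieldType) (n j : nat) (eps : R)
  (p q : 'I_n.+3 -> R) :
  (1 <= j)%N -> (j <= n.+3 - 1)%N ->
  0 < eps -> eps <= (j.+1%:R)^-1 ->
  prob_vec p -> prob_vec q ->
  1 - eps <= p ord0 ->
  (forall i k : 'I_n.+3, (i <= k)%N -> q i <= q k) ->
  Psi j p q <= Psi j p (merge12 q).
Proof.
move=> hj1 hjb he heps [p0 hsum] [q0 _] hp0 hq.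
have hjl : (j < n.+3)%N by move: hjb; rewrite subn1.
set jj : 'I_n.+3 := Ordinal hjl.
have hjj : val jj = j by [].
have sj : forall (x : 'I_n.+3 -> R) (s : 'S_n.+3),
    \sum_(i < n.+3 | val i == j) x (s i) = x (s jj).
  move=> x s; apply: big_pred1 => i /=.
  by apply/eqP/eqP => [h|->]; [apply: val_inj|].
have PsiE : forall x : 'I_n.+3 -> R, Psi j p x =
    ((n.+3 - j - 1)`!%:R)^-1 * \sum_(s : 'S_n.+3) (BB j p s * x (s jj) + BB j x s * p (s jj)).
  by move=> x; rewrite /Psi; congr (_ * _); apply: eq_bigr => s _; rewrite !sj.
rewrite !PsiE; apply: ler_wpM2l; first by rewrite invr_ge0 ler0n.
rewrite !big_split /=.
have e2 : eps * 2 <= 1.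
  have h1 : eps * j.+1%:R <= 1.
    by move: heps; rewrite -[X in _ <= X]div1r ler_pdivlMr // ltr0Sn.
  have h2 : (2 : R) <= j.+1%:R by rewrite ler_nat ltnS.
  nra.
have p01 : p ord0 + p (x1 n) <= 1.
  rewrite -hsum (bigD1 ord0) //= (bigD1 (x1 n)) /=; last by rewrite eq_sym x01.
  rewrite addrA lerDl; apply: sumr_ge0 => i _; exact: p0.
have p10 : p (x1 n) <= p ord0 by lra.
have p2 : 1 - p ord0 - p (x1 n) <= p ord0 - p (x1 n) by lra.
have qm : forall x, x != ord0 -> q (x1 n) <= q x.
  move=> x hx; apply: hq; rewrite /x1 inordK // lt0n.
  by apply: contra hx => /eqP h; apply/eqP/val_inj.
apply: lerD.
  exact: term1.
exact: term2.
Qed.
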